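(* Let $g:\mathbb{R}^p\to[-\infty,\infty]$ be a proper nearly convex function and $A\in\mathbb{R}^{p\times n}$ such that $A(\mathbb{R}^n)\cap\operatorname{ri}(\operatorname{dom} g)\neq\emptyset$. Then $(g\circ A)^*(w)=\inf\{g^*(v): v\in\mathbb{R}^p,\ A^Tv=w\}$ for all $w\in\mathbb{R}^n$. Moreover, if $(g\circ A)^*(w)\in\mathbb{R}$, there exists $v\in\mathbb{R}^p$ with $A^Tv=w$ and $(g\circ A)^*(w)=g^*(v)$.
   Context: A set $\Omega$ is nearly convex if there is a convex set $C$ with $C\subset\Omega\subset\overline{C}$; $\operatorname{ri}\Omega=\{a\in\Omega:\exists\delta>0,\ B(a;\delta)\cap\operatorname{aff}\Omega\subset\Omega\}$. A function $g$ is nearly convex if its epigraph is nearly convex, proper if $\operatorname{dom}g=\{g<\infty\}\neq\emptyset$ and $g>-\infty$. Fenchel conjugate: $g^*(v)=\sup_y\{\langle v,y\rangle-g(y)\}$. *)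

(* Defs.v *)
From HB Require Import structures.
From mathcomp Require Import all_boot all_order all_algebra.
From mathcomp Require Import all_classical all_reals all_analysis.
Set Implicit Arguments. Unset Strict Implicit. Unset Printing Implicit Defensive.
Import Order.TTheory GRing.Theory Num.Theory.
Import numFieldNormedType.Exports.
Local Open Scope classical_set_scope.
Local Open Scope ring_scope.

Definition dotv (R : realType) (p : nat) (v y : 'cV[R]_p) : R :=
  \sum_(i < p) v i 0 * y i 0.

Definition eball (R : realType) (p : nat) (a : 'cV[R]_p) (d : R) : set 'cV[R]_p :=
  [set x | \sum_(i < p) (x i 0 - a i 0) ^+ 2 < d ^+ 2].

Definition aff (R : realType) (p : nat) (S : set 'cV[R]_p) : set 'cV[R]_p :=
  [set x | exists (k : nat) (pt : 'I_k -> 'cV[R]_p) (c : 'I_k -> R),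
     (forall i, S (pt i)) /\ \sum_(i < k) c i = 1 /\ x = \sum_(i < k) c i *: pt i].

Definition ri (R : realType) (p : nat) (S : set 'cV[R]_p) : set 'cV[R]_p :=
  [set a | S a /\ exists d : R, 0 < d /\ eball a d `&` aff S `<=` S].

Definition convex_set2 (R : realType) (p : nat) (C : set ('cV[R]_p * R)) : Prop :=
  forall y1 t1 y2 t2 (l : R), C (y1, t1) -> C (y2, t2) -> 0 <= l <= 1 ->
    C (l *: y1 + (1 - l) *: y2, l * t1 + (1 - l) * t2).

Definition nearly_convex_set2 (R : realType) (p : nat) (O : set ('cV[R]_p * R)) : Prop :=
  exists C, convex_set2 C /\ C `<=` O /\ O `<=` closure C.

Definition epigraph (R : realType) (p : nat) (g : 'cV[R]_p -> \bar R) : set ('cV[R]_p * R) :=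
  [set yt | (g yt.1 <= yt.2%:E)%E].

Definition nearly_convex_fun (R : realType) (p : nat) (g : 'cV[R]_p -> \bar R) : Prop :=
  nearly_convex_set2 (epigraph g).

Definition edom (R : realType) (p : nat) (g : 'cV[R]_p -> \bar R) : set 'cV[R]_p :=
  [set y | (g y < +oo)%E].

Definition proper_fun (R : realType) (p : nat) (g : 'cV[R]_p -> \bar R) : Prop :=
  edom g !=set0 /\ forall y, (-oo < g y)%E.

Definition fconj (R : realType) (p : nat) (g : 'cV[R]_p -> \bar R) (v : 'cV[R]_p) : \bar R :=
  ereal_sup [set ((dotv v y)%:E - g y)%E | y in [set: 'cV[R]_p]].

(* Main.v *)
Require Import Defs.
From HB Require Import structures.
From mathcomp Require Import all_boot all_order all_algebra.
From mathcomp Require Import all_classical all_reals all_analysis.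
From mathcomp Require Import lra ring.
Import Order.TTheory GRing.Theory Num.Theory.
Import numFieldNormedType.Exports.
Set Implicit Arguments. Unset Strict Implicit. Unset Printing Implicit Defensive.
Local Open Scope classical_set_scope.
Local Open Scope ring_scope.
Section Box.
Variables (R : realType) (m : nat).
Implicit Types (z : 'cV[R]_m) (D : set 'cV[R]_m).

Definition cvx D := forall z1 z2 (l : R), D z1 -> D z2 -> 0 <= l <= 1 ->
  D (l *: z1 + (1 - l) *: z2).
Definition supp (k : nat) z := forall i : 'I_m, (k <= i)%N -> z i 0 = 0.
Definition dense_k k (r : R) D := forall z, supp k z ->
  (forall i : 'I_m, (i < k)%N -> `|z i 0| < r) -> forall eps, 0 < eps ->
  exists z', D z' /\ supp k z' /\ forall i : 'I_m, (i < k)%N -> `|z' i 0 - z i 0| < eps.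

Lemma entD z (c : R) (ko i : 'I_m) :
  (z + c *: delta_mx ko 0) i 0 = z i 0 + (if i == ko then c else 0).
Proof. by rewrite !mxE eqxx andbT; case: eqP => _; rewrite ?mulr1 ?mulr0. Qed.

Lemma entC z1 z2 (l : R) i : (l *: z1 + (1 - l) *: z2) i 0 = l * z1 i 0 + (1 - l) * z2 i 0.
Proof. by rewrite !mxE. Qed.

Lemma box_lemma k : (k <= m)%N -> forall (r : R) D, 0 < r -> cvx D -> dense_k k r D ->
  forall z, supp k z -> (forall i : 'I_m, (i < k)%N -> `|z i 0| <= r / 2) -> D z.
Proof.
elim: k => [_|k IH hk] r D r0 cD dD.
  move=> z sz _.
  have [z' [Dz' [sz' _]]] := dD z sz (fun i (hi : (i < 0)%N) => False_ind _ (notF hi)) 1 ltr01.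
  suff -> : z = z' by [].
  by apply/matrixP => i j; rewrite (ord1 j) sz // sz'.
pose ko := Ordinal hk.
pose ek : 'cV[R]_m := delta_mx ko 0.
have ltk : forall i : 'I_m, (i < k)%N -> i != ko.
  by move=> i hi; apply/eqP => ei; move: hi; rewrite ei /= ltnn.
have suppS : forall z, supp k.+1 z -> supp k (z - z ko 0 *: ek).
  move=> z sz i hi; rewrite -scaleNr entD; case: eqP => [->|ne]; first by rewrite subrr.
  rewrite addr0 sz //; rewrite leq_eqVlt in hi; case/orP: hi => // /eqP ei.
  by exfalso; apply: ne; apply: val_inj.
have key : forall sgn : R, (sgn = 1 \/ sgn = -1) ->
  forall z, supp k z -> (forall i : 'I_m, (i < k)%N -> `|z i 0| <= r / 2) ->
  exists c, r / 2 < sgn * c /\ D (z + c *: ek).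
  move=> sgn hsg.
  have sg2 : sgn * sgn = 1 by case: hsg => ->; rewrite ?mulr1 ?mulrNN ?mulr1.
  pose Dp := [set z | supp k z /\ exists c, r / 2 < sgn * c /\ D (z + c *: ek)].
  have cDp : cvx Dp.
    move=> z1 z2 l [s1 [c1 [h1 D1]]] [s2 [c2 [h2 D2]]] hl; split.
      by move=> i hi; rewrite entC s1 // s2 // !mulr0 addr0.
    exists (l * c1 + (1 - l) * c2); split.
      case/andP: hl => l0 l1; rewrite mulrDr !mulrA (mulrC sgn) (mulrC sgn) -!mulrA.
      have ha : 0 <= l * (sgn * c1 - r / 2) by apply: mulr_ge0 => //; lra.
      have hb : 0 <= (1 - l) * (sgn * c2 - r / 2) by apply: mulr_ge0 => //; lra.
      have [lp|] := ltP 0 l.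
        have : 0 < l * (sgn * c1 - r / 2) by apply: mulr_gt0 => //; lra.
        lra.
      move=> l0'; have -> : l = 0 by apply/eqP; rewrite eq_le l0' l0.
      lra.
    have := cD _ _ l D1 D2 hl.
    congr D; apply/matrixP => i j; rewrite !mxE; ring.
  have dDp : dense_k k r Dp.
    move=> z sz bz eps e0.
    pose eps' := Num.min eps (r / 4).
    have e'0 : 0 < eps' by rewrite lt_min e0 /=; lra.
    pose zz := z + (sgn * (3 * r / 4)) *: ek.
    have szz : supp k.+1 zz.
      move=> i hi; rewrite entD sz ?(leq_trans _ hi) //.
      by case: eqP => [ei|]; [move: hi; rewrite ei /= ltnn|rewrite addr0].
    have bzz : forall i : 'I_m, (i < k.+1)%N -> `|zz i 0| < r.
      move=> i hi; rewrite entD; case: eqP => [->|ne].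
        rewrite sz //= add0r normrM.
        have -> : `|sgn| = 1 by case: hsg => ->; rewrite ?normrN normr1.
        rewrite mul1r ger0_norm; lra.
      rewrite addr0 bz //; rewrite ltnS leq_eqVlt in hi; case/orP: hi => // /eqP ei.
      by exfalso; apply: ne; apply: val_inj.
    have [z' [Dz' [sz' cz']]] := dD zz szz bzz eps' e'0.
    exists (z' - z' ko 0 *: ek); split; last split.
    - split; first exact: suppS.
      exists (z' ko 0); split; last by rewrite subrK.
      have := cz' ko (ltnSn k); rewrite entD eqxx sz //= add0r.
      have h := cz' ko (ltnSn k); rewrite entD eqxx sz //= add0r in h.
      have he : eps' <= r / 4 by rewrite ge_min lexx orbT.
      move: h; rewrite ltr_norml => /andP [h1 h2].
      by case: hsg h1 h2 => -> h1 h2; rewrite ?mul1r ?mulN1r in h1 h2 *; lra.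
    - exact: suppS.
    - move=> i hi; have h := cz' i (ltnW hi).
      have he : eps' <= eps by rewrite ge_min lexx.
      rewrite -scaleNr entD entD (negbTE (ltk i hi)) !addr0 in h *.
      lra.
  move=> z sz bz; have [_ hc] := IH (ltnW hk) r Dp r0 cDp dDp z sz bz; exact: hc.
move=> z sz bz.
have b0 : forall i : 'I_m, (i < k)%N -> `|(z - z ko 0 *: ek) i 0| <= r / 2.
  move=> i hi; rewrite -scaleNr entD (negbTE (ltk i hi)) addr0; exact: bz (ltnW hi).
have [c1 [h1 D1]] := key 1 (or_introl erefl) _ (suppS z sz) b0.
have [c2 [h2 D2]] := key (-1) (or_intror erefl) _ (suppS z sz) b0.
rewrite mul1r in h1; rewrite mulN1r in h2.
have bk := bz ko (ltnSn k); move: bk; rewrite ler_norml => /andP [bk1 bk2].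
have c12 : 0 < c1 - c2 by lra.
pose l := (z ko 0 - c2) / (c1 - c2).
have hl : 0 <= l <= 1.
  apply/andP; split; first by apply: divr_ge0; lra.
  by rewrite ler_pdivrMr // mul1r; lra.
have := cD _ _ l D1 D2 hl.
have El : l * c1 + (1 - l) * c2 = z ko 0.
  rewrite /l; field; lra.
congr D; apply/matrixP => i j; rewrite (ord1 j) !mxE.
have -> : l * (z i 0 - z ko 0 * ((i == ko) && true)%:R + c1 * ((i == ko) && true)%:R) +
  (1 - l) * (z i 0 - z ko 0 * ((i == ko) && true)%:R + c2 * ((i == ko) && true)%:R) =
  z i 0 + ((i == ko) && true)%:R * (l * c1 + (1 - l) * c2 - z ko 0) by ring.
by rewrite El subrr mulr0 addr0.
Qed.
End Box.
Section HB.
Variables (R : realType) (M : nat).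
Implicit Types (q : 'cV[R]_M -> R) (x y e : 'cV[R]_M).

Definition sublin q := (forall x y, q (x + y) <= q x + q y) /\
  (forall (l : R) x, 0 < l -> q (l *: x) <= l * q x).

Lemma sublin0 q : sublin q -> 0 <= q 0.
Proof. move=> [sa _]; have := sa 0 0; rewrite addr0; lra. Qed.

Lemma sublin_homE q l x : sublin q -> 0 < l -> q (l *: x) = l * q x.
Proof.
move=> [sa hm] l0; apply/eqP; rewrite eq_le hm //=.
have := hm l^-1 (l *: x); rewrite invr_gt0 scalerA mulVf ?gt_eqF // scale1r => /(_ l0) h.
have li : 0 < l^-1 by rewrite invr_gt0.
by rewrite -(ler_pM2l li) mulrA mulVf ?gt_eqF // mul1r.
Qed.

Lemma sublin_lin q e c : sublin q -> c * q e <= q (c *: e).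
Proof.
move=> sq; have [c0|c0|->] := ltrgtP c 0; last by rewrite mul0r scale0r sublin0.
- have nc : 0 < - c by rewrite oppr_gt0.
  have h1 := sublin_homE e sq nc.
  have := sq.1 (c *: e) ((- c) *: e); rewrite -scalerDl subrr scale0r h1.
  have := sublin0 sq; lra.
- by rewrite sublin_homE.
Qed.

Definition qstep q e x := inf [set q (x + c *: e) - c * q e | c in [set: R]].

Lemma qstep_lb q e x : sublin q -> has_lbound [set q (x + c *: e) - c * q e | c in [set: R]].
Proof.
move=> sq; exists (- q (- x)) => _ [c _ <-].
have h := sq.1 (x + c *: e) (- x); rewrite addrC addKr in h.
have := sublin_lin e c sq; lra.
Qed.

Lemma qstep_ne q e x : [set q (x + c *: e) - c * q e | c in [set: R]] !=set0.
Proof. by exists (q (x + 0 *: e) - 0 * q e); exists 0. Qed.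

Lemma qstep_le q e x c : sublin q -> qstep q e x <= q (x + c *: e) - c * q e.
Proof. by move=> sq; apply: (ge_inf (qstep_lb e x sq)); exists c. Qed.

Lemma qstep_leq q e x : sublin q -> qstep q e x <= q x.
Proof. by move=> sq; have := qstep_le e x 0 sq; rewrite scale0r addr0 mul0r subr0. Qed.

Lemma qstep_cmp q e x' x d : sublin q ->
  (forall c, exists c', q (x' + c' *: e) - c' * q e <= q (x + c *: e) - c * q e + d) ->
  qstep q e x' <= qstep q e x + d.
Proof.
move=> sq H; rewrite -lerBlDr; apply: lb_le_inf; first exact: qstep_ne.
move=> _ [c _ <-]; have [c' Hc'] := H c; have := qstep_le e x' c' sq; lra.
Qed.

Lemma qstep_sublin q e : sublin q -> sublin (qstep q e).
Proof.
move=> sq; split.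
- move=> x y; rewrite -lerBlDr; apply: lb_le_inf; first exact: qstep_ne.
  move=> _ [c1 _ <-]; rewrite lerBlDr -lerBlDl.
  apply: lb_le_inf; first exact: qstep_ne.
  move=> _ [c2 _ <-]; rewrite lerBlDr.
  have := qstep_le e (x + y) (c1 + c2) sq.
  have := sq.1 (x + c1 *: e) (y + c2 *: e).
  have -> : x + c1 *: e + (y + c2 *: e) = x + y + (c1 + c2) *: e.
    by rewrite scalerDl; rewrite !addrA; congr (_ + _); rewrite -!addrA; congr (_ + _); rewrite addrC.
  lra.
- move=> l x l0; rewrite mulrC -ler_pdivrMr //; apply: lb_le_inf; first exact: qstep_ne.
  move=> _ [c _ <-]; rewrite ler_pdivrMr // mulrC.
  have := qstep_le e (l *: x) (l * c) sq.
  have := sublin_homE (x + c *: e) sq l0.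
  rewrite scalerDr scalerA => ->. rewrite mulrBr mulrA. lra.
Qed.

Lemma qstep_trans q e x s : sublin q -> qstep q e (x + s *: e) = qstep q e x + s * q e.
Proof.
move=> sq; apply/eqP; rewrite eq_le; apply/andP; split.
- apply: qstep_cmp => // c; exists (c - s).
  rewrite -addrA -scalerDl (addrC s) subrK. rewrite mulrBl. lra.
- rewrite -lerBrDr; apply: qstep_cmp => // c; exists (c + s).
  rewrite -(addrA x) -scalerDl (addrC s) mulrDl. lra.
Qed.

Lemma qstep_inherit q e e' g x s : sublin q ->
  (forall x s, q (x + s *: e') = q x + s * g) ->
  qstep q e (x + s *: e') = qstep q e x + s * g.
Proof.
move=> sq H; apply/eqP; rewrite eq_le; apply/andP; split.
- apply: qstep_cmp => // c; exists c.
  rewrite -addrA (addrC (s *: e')) addrA H. lra.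
- rewrite -lerBrDr; apply: qstep_cmp => // c; exists c.
  have := H (x + s *: e' + c *: e) (- s).
  have -> : x + s *: e' + c *: e + - s *: e' = x + c *: e.
    by rewrite scaleNr addrAC addrK.
  lra.
Qed.


Lemma HB_ind q : sublin q -> forall j, (j <= M)%N -> exists qj, sublin qj /\
  (forall x, qj x <= q x) /\ exists g : 'cV[R]_M, forall i : 'I_M, (i < j)%N ->
  forall x s, qj (x + s *: delta_mx i 0) = qj x + s * g i 0.
Proof.
move=> sq; elim=> [_|j IH hj].
  by exists q; split => //; split => //; exists 0 => i.
have [qj [sj [lej [g Hg]]]] := IH (ltnW hj).
pose jo := Ordinal hj.
pose e : 'cV[R]_M := delta_mx jo 0.
exists (qstep qj e); split; first exact: qstep_sublin.
split; first by move=> x; apply: le_trans (lej x); exact: qstep_leq.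
exists (\col_i (if i == jo then qj e else g i 0)) => i hi x s.
rewrite mxE; case: eqP => [->|neq].
  exact: qstep_trans.
apply: qstep_inherit => //; apply: Hg.
rewrite ltnS leq_eqVlt in hi; case/orP: hi => // /eqP hi.
by exfalso; apply: neq; apply: val_inj.
Qed.

Lemma HB_main q : sublin q -> exists g : 'cV[R]_M, forall x, dotv g x <= q x.
Proof.
move=> sq; have [qM [sM [leM [g Hg]]]] := HB_ind sq (leqnn M).
exists g => x.
have Hs : forall (s : seq 'I_M) y, qM (\sum_(i <- s) x i 0 *: delta_mx i 0 + y) =
    qM y + \sum_(i <- s) x i 0 * g i 0.
  elim=> [|a s IHs] y; first by rewrite !big_nil add0r addr0.
  rewrite !big_cons -addrA addrC Hg // IHs; lra.
have Hx : x = \sum_(i < M) x i 0 *: delta_mx i 0.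
  rewrite {1}(matrix_sum_delta x); apply: eq_bigr => i _; by rewrite big_ord1.
have := Hs (index_enum 'I_M) 0; rewrite addr0 -Hx => Hq.
have h0 := sublin0 sM.
rewrite /dotv; have -> : \sum_(i < M) g i 0 * x i 0 = \sum_(i <- index_enum 'I_M) x i 0 * g i 0.
  by rewrite /index_enum; apply: eq_bigr => i _; rewrite mulrC.
have := leM x; lra.
Qed.
End HB.
Lemma span_exists (R : realType) (p : nat) (S : set 'cV[R]_p) (a0 : 'cV[R]_p) :
  exists m (B : 'M[R]_(m, p)), (forall i : 'I_m, exists y, S y /\ row i B = (y - a0)^T) /\
    forall y, S y -> ((y - a0)^T <= B)%MS.
Proof.
pose P n := exists m (B : 'M[R]_(m, p)),
  (forall i : 'I_m, exists y, S y /\ row i B = (y - a0)^T) /\ \rank B = n.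
have ex0 : exists n, `[< P n >].
  exists 0%N; apply/asboolP; exists 0%N, 0; split; first by case.
  by rewrite mxrank0.
have ub : forall n, `[< P n >] -> (n <= p)%N.
  by move=> n /asboolP [m [B [_ <-]]]; exact: rank_leq_col.
case: (ex_maxnP ex0 ub) => n0 /asboolP [m [B [HB rB]]] Hmax.
exists m, B; split => // y Sy.
pose B' := col_mx B (y - a0)^T.
have HB' : forall i, exists y0, S y0 /\ row i B' = (y0 - a0)^T.
  move=> i; case: (splitP i) => j hj.
    have -> : i = lshift 1 j by apply: val_inj.
    by rewrite rowKu; apply: HB.
  have -> : i = rshift m j by apply: val_inj.
  by exists y; rewrite rowKd (ord1 j) /row; split => //; apply/matrixP => a b; rewrite !mxE (ord1 a).
have le' : (\rank B' <= n0)%N by apply: Hmax; apply/asboolP; exists (m + 1)%N, B'.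
have sub : (B <= B')%MS by rewrite -addsmxE addsmxSl.
have := mxrank_leqif_sup sub; rewrite rB => /leqifP.
case: ifP => [h|_ h]; last by exfalso; move: h; rewrite ltnNge le'.
by move: h; rewrite col_mx_sub => /andP [].
Qed.
Lemma dotvE (R : realType) (p : nat) (u y : 'cV[R]_p) : dotv u y = (u^T *m y) 0 0.
Proof. by rewrite /dotv mxE; apply: eq_bigr => i _; rewrite mxE. Qed.

Lemma dotv_tr (R : realType) (p n : nat) (A : 'M[R]_(p, n)) v x :
  dotv (A^T *m v) x = dotv v (A *m x).
Proof. by rewrite !dotvE trmx_mul trmxK mulmxA. Qed.

Lemma nbhs_box (R : realType) (p : nat) (y : 'cV[R]_p) (t : R) (e : R) : 0 < e ->
  nbhs (y, t) [set z : 'cV[R]_p * R | (forall i j, `|z.1 i j - y i j| < e) /\ `|z.2 - t| < e].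
Proof.
move=> e0.
apply/nbhs_ballP. exists e => //= -[z1 z2] [/= [_ H1] H2]; split.
  move=> i j; have := H1 i j. rewrite /ball /=. by rewrite distrC.
by move: H2; rewrite /ball /= distrC.
Qed.

Lemma closure_box (R : realType) (p : nat) (C : set ('cV[R]_p * R)) y t :
  closure C (y, t) -> forall e, 0 < e -> exists y' t', C (y', t') /\
    (forall i j, `|y' i j - y i j| < e) /\ `|t' - t| < e.
Proof.
move=> cl e e0; have [[y' t'] [Cz [H1 H2]]] := cl _ (nbhs_box y t e0).
by exists y', t'.
Qed.

Lemma dotvDr (R : realType) (k : nat) (u y z : 'cV[R]_k) : dotv u (y + z) = dotv u y + dotv u z.
Proof. by rewrite /dotv -big_split; apply: eq_bigr => i _; rewrite mxE mulrDr. Qed.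
Lemma dotvZr (R : realType) (k : nat) (u y : 'cV[R]_k) (l : R) : dotv u (l *: y) = l * dotv u y.
Proof. by rewrite /dotv mulr_sumr; apply: eq_bigr => i _; rewrite mxE mulrCA. Qed.
Lemma dotvNr (R : realType) (k : nat) (u y : 'cV[R]_k) : dotv u (- y) = - dotv u y.
Proof. by rewrite -scaleN1r dotvZr mulN1r. Qed.
Lemma dotvBr (R : realType) (k : nat) (u y z : 'cV[R]_k) : dotv u (y - z) = dotv u y - dotv u z.
Proof. by rewrite dotvDr dotvNr. Qed.
Lemma dotv0r (R : realType) (k : nat) (u : 'cV[R]_k) : dotv u 0 = 0.
Proof. by rewrite /dotv big1 // => i _; rewrite mxE mulr0. Qed.
Lemma dotv_comb (R : realType) (k : nat) (u y z : 'cV[R]_k) (l : R) :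
  dotv u (l *: y + (1 - l) *: z) = l * dotv u y + (1 - l) * dotv u z.
Proof. by rewrite dotvDr !dotvZr. Qed.
Lemma dotv_self0 (R : realType) (k : nat) (u : 'cV[R]_k) : dotv u u <= 0 -> u = 0.
Proof.
move=> h; have hs : forall i, 0 <= u i 0 * u i 0 by move=> i; rewrite -expr2 sqr_ge0.
have h0 : dotv u u = 0.
  apply/eqP; rewrite eq_le h /=; apply: sumr_ge0 => i _; exact: hs.
apply/matrixP => i j; rewrite (ord1 j) mxE.
have := @psumr_eq0P R _ xpredT (fun i => u i 0 * u i 0) (fun i _ => hs i) h0 i isT.
by move/eqP; rewrite mulf_eq0 orbb => /eqP.
Qed.

Lemma dotvBl (R : realType) (k : nat) (a b y : 'cV[R]_k) : dotv (a - b) y = dotv a y - dotv b y.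
Proof. by rewrite /dotv -sumrB; apply: eq_bigr => i _; rewrite !mxE mulrBl. Qed.

Section Main.
Variables (R : realType) (p n : nat) (g : 'cV[R]_p -> \bar R) (A : 'M[R]_(p, n)).
Variables (w : 'cV[R]_n) (alpha : R) (C : set ('cV[R]_p * R)) (x0 : 'cV[R]_n) (d : R).
Hypothesis gfin : forall y, (-oo < g y)%E.
Hypothesis Cconv : convex_set2 C.
Hypothesis CsubE : C `<=` epigraph g.
Hypothesis EsubC : epigraph g `<=` closure C.
Hypothesis a0dom : edom g (A *m x0).
Hypothesis d0 : 0 < d.
Hypothesis hri : eball (A *m x0) d `&` aff (edom g) `<=` edom g.
Hypothesis Hal : forall x, ((dotv w x)%:E - g (A *m x) <= alpha%:E)%E.

Let a0 := A *m x0.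
Let D := [set y | exists t, C (y, t)].

Lemma DsubS : D `<=` edom g.
Proof.
move=> y [t /CsubE]; rewrite /epigraph /edom /= => h.
by apply: le_lt_trans h _; rewrite ltry.
Qed.

Lemma gfinE y : edom g y -> g y = (fine (g y))%:E.
Proof.
move=> h; rewrite fineK // fin_numE; apply/andP; split.
  by rewrite gt_eqF // gfin.
by rewrite lt_eqF.
Qed.

Lemma S_dense y : edom g y -> forall e, 0 < e ->
  exists y', D y' /\ forall i j, `|y' i j - y i j| < e.
Proof.
move=> Sy e e0.
have : epigraph g (y, fine (g y)) by rewrite /epigraph /= -gfinE.
move/EsubC/closure_box => /(_ e e0) [y' [t' [Cy [H1 _]]]].
by exists y'; split => //; exists t'.
Qed.

Lemma D_conv y1 y2 l : D y1 -> D y2 -> 0 <= l <= 1 -> D (l *: y1 + (1 - l) *: y2).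
Proof.
move=> [t1 h1] [t2 h2] hl; exists (l * t1 + (1 - l) * t2); exact: Cconv.
Qed.

Lemma C_bound y t x : C (y, t) -> y = A *m x -> dotv w x - alpha <= t.
Proof.
move=> Cy hy; have Sy : edom g y by apply: DsubS; exists t.
have hg := CsubE Cy; rewrite /epigraph /= in hg.
have := Hal x; rewrite -hy (gfinE Sy) in hg *.
rewrite -EFinB !lee_fin in hg *; lra.
Qed.

Lemma row_sum_le (a b : nat) (X : 'M[R]_(a, b)) i :
  \sum_j `|X i j| <= \sum_i0 \sum_j `|X i0 j|.
Proof.
rewrite (bigD1 i) //= lerDl; apply: sumr_ge0 => k _; apply: sumr_ge0 => j _.
exact: normr_ge0.
Qed.

Lemma mx_bound (a b : nat) (X : 'M[R]_(a, b)) (e : 'cV[R]_b) eta : 0 <= eta ->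
  (forall j, `|e j 0| <= eta) -> forall i,
  `|(X *m e) i 0| <= (\sum_i0 \sum_j `|X i0 j|) * eta.
Proof.
move=> eta0 he i; rewrite mxE; apply: le_trans (ler_norm_sum _ _ _) _.
apply: le_trans (_ : \sum_j `|X i j| * eta <= _).
  by apply: ler_sum => j _; rewrite normrM ler_wpM2l.
by rewrite -mulr_suml ler_wpM2r ?row_sum_le.
Qed.

Section Coord.
Variables (m : nat) (B : 'M[R]_(m, p)).
Hypothesis HBrows : forall i : 'I_m, exists y, edom g y /\ row i B = (y - a0)^T.
Hypothesis HBspan : forall y, edom g y -> ((y - a0)^T <= B)%MS.

Let Phi (z : 'cV[R]_m) := a0 + B^T *m z.

Lemma Phi_aff z : aff (edom g) (Phi z).
Proof.
have [yf Hyf] := boolp.choice HBrows.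
have Bij : forall i j, B i j = yf i j 0 - a0 j 0.
  move=> i j; have := (Hyf i).2; move/matrixP => /(_ 0 j).
  by rewrite !mxE.
exists m.+1.
exists (fun i => if unlift ord0 i is Some j then yf j else a0).
exists (fun i => if unlift ord0 i is Some j then z j 0 else 1 - \sum_j z j 0).
split; first by move=> i; case: unlift => [j|]; [exact: (Hyf j).1|exact: a0dom].
split.
  rewrite big_ord_recl unlift_none; under [X in _ + X = _]eq_bigr do rewrite liftK.
  by rewrite subrK.
rewrite /Phi; clearbody a0.
apply/matrixP => j k; rewrite (ord1 k) summxE big_ord_recl unlift_none.
under [X in _ = _ + X]eq_bigr do rewrite liftK.
rewrite !mxE.
have E1 : \sum_j0 B^T j j0 * z j0 0 = \sum_i z i 0 * yf i j 0 - (\sum_i z i 0) * a0 j 0.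
  rewrite mulr_suml -sumrB; apply: eq_bigr => i _; rewrite mxE Bij; ring.
have E2 : \sum_i (z i 0 *: yf i) j 0 = \sum_i z i 0 * yf i j 0.
  by apply: eq_bigr => i _; rewrite mxE.
rewrite E1 E2; ring.
Qed.

Let SB := \sum_i \sum_j `|(B^T) i j|.
Let r := d / ((p%:R + 1) * (SB + 1)).

Lemma SB_ge0 : 0 <= SB.
Proof. by apply: sumr_ge0 => i _; apply: sumr_ge0 => j _; exact: normr_ge0. Qed.

Lemma r_gt0 : 0 < r.
Proof.
have P0 : (0 <= p%:R :> R) by [].
have := SB_ge0 => ?.
rewrite /r divr_gt0 // mulr_gt0 //; lra.
Qed.

Lemma Phi_ball (z : 'cV[R]_m) : (forall i, `|z i 0| < r) -> eball a0 d (Phi z).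
Proof.
move=> hz; rewrite /eball /=.
set beta := SB * r.
have hb : forall i, ((Phi z) i 0 - a0 i 0) ^+ 2 <= beta ^+ 2.
  move=> i; have -> : (Phi z) i 0 - a0 i 0 = (B^T *m z) i 0.
    by rewrite /Phi [X in X - _]mxE addrAC subrr add0r.
  have hx : `|(B^T *m z) i 0| <= beta.
    exact: (@mx_bound _ _ (B^T) z r (ltW r_gt0) (fun j => ltW (hz j)) i).
  move: hx; rewrite ler_norml => /andP [h1 h2]; nra.
apply: le_lt_trans (ler_sum _ (fun i _ => hb i)) _.
rewrite sumr_const card_ord -mulr_natr.
have P0 : (0 <= p%:R :> R) by [].
have beta0 : 0 <= beta by rewrite mulr_ge0 ?SB_ge0 // ltW // r_gt0.
have hbd : beta * (p%:R + 1) <= d.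
  have S0 := SB_ge0.
  have -> : beta * (p%:R + 1) = d * (SB / (SB + 1)).
    rewrite /beta /r; field; apply/andP; split; apply/eqP; lra.
  rewrite ler_piMr ?ltW // ltr_pdivrMr; lra.
have sq : (beta * (p%:R + 1)) ^+ 2 <= d ^+ 2.
  have : 0 <= beta * (p%:R + 1) by apply: mulr_ge0 => //; lra.
  nra.
have [->|bp] := eqVneq beta 0.
  by rewrite expr0n /= mul0r exprn_gt0.
have b2 : 0 < beta ^+ 2 by rewrite exprn_gt0 // lt_def bp beta0.
have : beta ^+ 2 * p%:R < beta ^+ 2 * (p%:R + 1) ^+ 2.
  rewrite ltr_pM2l //; nra.
rewrite exprMn in sq; lra.
Qed.

Let Qm := (pinvmx B)^T.
Let SQ := \sum_i \sum_j `|Qm i j|.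

Lemma coordK (e : 'cV[R]_p) : (e^T <= B)%MS -> B^T *m (Qm *m e) = e.
Proof.
move=> /mulmxKpV h.
transitivity ((e^T *m pinvmx B *m B)^T); last by rewrite h trmxK.
by rewrite (trmx_mul (e^T *m pinvmx B) B) (trmx_mul e^T (pinvmx B)) trmxK.
Qed.

Lemma D_box (z : 'cV[R]_m) : (forall i, `|z i 0| <= r / 2) -> D (Phi z).
Proof.
move=> H.
pose D' := [set z : 'cV[R]_m | D (Phi z)].
have cD' : cvx D'.
  move=> z1 z2 l h1 h2 hl; rewrite /D' /=.
  have -> : Phi (l *: z1 + (1 - l) *: z2) = l *: Phi z1 + (1 - l) *: Phi z2.
    rewrite /Phi mulmxDr -!scalemxAr !scalerDr addrACA -scalerDl.
    have -> : l + (1 - l) = 1 by ring.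
    by rewrite scale1r.
  exact: D_conv.
have dD' : dense_k m r D'.
  move=> z0 _ hz eps e0.
  have hz' : forall i, `|z0 i 0| < r by move=> i; apply: hz.
  have Sz : edom g (Phi z0) by apply: hri; split; [exact: Phi_ball|exact: Phi_aff].
  have SQ0 : 0 <= SQ.
    by apply: sumr_ge0 => i _; apply: sumr_ge0 => j _; exact: normr_ge0.
  have eta0 : 0 < eps / (SQ + 1) by rewrite divr_gt0 //; lra.
  have [y' [Dy' hy']] := S_dense Sz eta0.
  pose e := y' - Phi z0.
  have he : (e^T <= B)%MS.
    have -> : e = (y' - a0) + B^T *m (- z0).
      by rewrite /e /Phi mulmxN opprD addrA.
    rewrite linearD /=; apply: addmx_sub; first by apply: HBspan; exact: DsubS.
    by rewrite trmx_mul trmxK submxMl.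
  exists (z0 + Qm *m e); split; last split.
  - rewrite /D' /= /Phi mulmxDr addrA coordK //.
    by rewrite /e /Phi addrC subrK.
  - by move=> i; rewrite leqNgt ltn_ord.
  - move=> i _; rewrite [X in X - _]mxE addrAC subrr add0r.
    apply: le_lt_trans (@mx_bound _ _ Qm e (eps / (SQ + 1)) (ltW eta0) _ i) _.
      move=> j; apply: ltW.
      have -> : e j 0 = y' j 0 - (Phi z0) j 0 by rewrite /e !mxE.
      exact: hy'.
    rewrite -/SQ.
    have -> : SQ * (eps / (SQ + 1)) = eps * (SQ / (SQ + 1)).
      field; lra.
    rewrite gtr_pMr // ltr_pdivrMr; lra.
apply: (@box_lemma R m m (leqnn m) r D' r_gt0 cD' dD' z).
  by move=> i; rewrite leqNgt ltn_ord.
by move=> i _; apply: H.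
Qed.


Let Psi : 'M[R]_(p, m + n) := row_mx B^T A.
Let G (z : 'cV[R]_(m + n)) (s : R) :=
  exists x t, C (A *m x + Psi *m z, t) /\ t - dotv w x <= s.

Lemma mx_comb (a b : nat) (X : 'M[R]_(a, b)) (y z : 'cV[R]_b) (l : R) :
  X *m (l *: y + (1 - l) *: z) = l *: (X *m y) + (1 - l) *: (X *m z).
Proof. by rewrite mulmxDr -!scalemxAr. Qed.

Lemma G_conv z1 s1 z2 s2 l : G z1 s1 -> G z2 s2 -> 0 <= l <= 1 ->
  G (l *: z1 + (1 - l) *: z2) (l * s1 + (1 - l) * s2).
Proof.
move=> [x1 [t1 [C1 h1]]] [x2 [t2 [C2 h2]]] hl.
exists (l *: x1 + (1 - l) *: x2), (l * t1 + (1 - l) * t2); split.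
  have := Cconv C1 C2 hl; congr C; congr pair.
  by rewrite !mx_comb !scalerDr addrACA.
rewrite dotv_comb; case/andP: hl => l0 l1.
have e1 : 0 <= l * (s1 - (t1 - dotv w x1)) by apply: mulr_ge0; lra.
have e2 : 0 <= (1 - l) * (s2 - (t2 - dotv w x2)) by apply: mulr_ge0; lra.
lra.
Qed.

Lemma G_0 s : G 0 s -> - alpha <= s.
Proof.
move=> [x [t [Ct h]]]; rewrite mulmx0 addr0 in Ct.
have := C_bound Ct (erefl _); lra.
Qed.

Lemma G_dir u : exists tau s, 0 < tau /\ G (tau *: u) s.
Proof.
pose u1 := usubmx u; pose u2 := dsubmx u.
pose N1 := \sum_i `|u1 i 0|.
have N10 : 0 <= N1 by apply: sumr_ge0 => i _; exact: normr_ge0.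
pose tau := r / 2 / (N1 + 1).
have tau0 : 0 < tau by rewrite /tau; apply: divr_gt0; [apply: divr_gt0; [exact: r_gt0|by []]|lra].
have hb : forall i, `|(tau *: u1) i 0| <= r / 2.
  move=> i; rewrite mxE normrM gtr0_norm //.
  have ui : `|u1 i 0| <= N1.
    rewrite /N1 (bigD1 i) //= lerDl; apply: sumr_ge0 => k _; exact: normr_ge0.
  have -> : r / 2 = tau * (N1 + 1) by rewrite /tau; field; lra.
  by apply: ler_wpM2l; [exact: ltW|lra].
have [t Ct] := D_box hb.
exists tau, (t - dotv w (x0 - tau *: u2)); split => //.
exists (x0 - tau *: u2), t; split => //.
suff -> : A *m (x0 - tau *: u2) + Psi *m (tau *: u) = Phi (tau *: u1) by [].
rewrite /Phi -[u]vsubmxK -scalemxAr mul_row_col -/u1 -/u2 scalerDr.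
rewrite mulmxBr -!scalemxAr.
by rewrite [tau *: (B^T *m u1) + _]addrC addrA subrK.
Qed.


Let qset (u : 'cV[R]_(m + n)) :=
  [set v | exists tau s, 0 < tau /\ G (tau *: u) s /\ v = (s + alpha) / tau].
Let q u := inf (qset u).

Lemma q_ne u : qset u !=set0.
Proof. by have [tau [s [t0 h]]] := G_dir u; exists ((s + alpha) / tau), tau, s. Qed.

Lemma q_lb u : has_lbound (qset u).
Proof.
have [sig [s' [sg0 Gs']]] := G_dir (- u).
exists (- ((s' + alpha) / sig)) => _ [tau [s [t0 [Gs ->]]]].
pose l := sig / (sig + tau).
have hl : 0 <= l <= 1.
  apply/andP; split; first by rewrite /l divr_ge0 //; lra.
  by rewrite /l ler_pdivrMr; lra.
have := G_conv Gs Gs' hl.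
have -> : l *: (tau *: u) + (1 - l) *: (sig *: - u) = 0.
  rewrite !scalerA scalerN -scaleNr -scalerDl.
  have -> : l * tau + - ((1 - l) * sig) = 0 by rewrite /l; field; lra.
  by rewrite scale0r.
move/G_0.
have -> : l * s + (1 - l) * s' = (sig * s + tau * s') / (sig + tau) by rewrite /l; field; lra.
rewrite ler_pdivlMr; last by lra.
move=> h.
have E : (s + alpha) / tau + (s' + alpha) / sig = (sig * (s + alpha) + tau * (s' + alpha)) / (sig * tau).
  by field; apply/andP; split; apply/eqP; lra.
have : 0 <= (sig * (s + alpha) + tau * (s' + alpha)) / (sig * tau).
  by apply: divr_ge0; [lra|apply: mulr_ge0; lra].
lra.
Qed.

Lemma q_le u tau s : 0 < tau -> G (tau *: u) s -> q u <= (s + alpha) / tau.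
Proof. by move=> t0 h; apply: (ge_inf (q_lb u)); exists tau, s. Qed.

Lemma q_sublin : sublin q.
Proof.
split.
- move=> x y; rewrite -lerBlDr; apply: lb_le_inf; first exact: q_ne.
  move=> _ [sig [s1 [sg0 [G1 ->]]]]; rewrite lerBlDr -lerBlDl.
  apply: lb_le_inf; first exact: q_ne.
  move=> _ [tau [s2 [t0 [G2 ->]]]]; rewrite lerBlDl.
  pose l := tau / (sig + tau).
  have hl : 0 <= l <= 1.
    apply/andP; split; first by rewrite /l divr_ge0 //; lra.
    by rewrite /l ler_pdivrMr; lra.
  have := G_conv G1 G2 hl.
  have -> : l *: (sig *: x) + (1 - l) *: (tau *: y) = (sig * tau / (sig + tau)) *: (x + y).
    rewrite !scalerA scalerDr; congr (_ *: _ + _ *: _); rewrite /l; field; lra.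
  move/(q_le _); have rp : 0 < sig * tau / (sig + tau).
    by apply: divr_gt0; [apply: mulr_gt0|lra].
  move/(_ rp) => h; apply: le_trans h _.
  rewrite le_eqVlt; apply/orP; left; apply/eqP; rewrite /l.
  field; apply/and3P; split; apply/eqP; lra.
- move=> l x l0; rewrite mulrC -ler_pdivrMr //; apply: lb_le_inf; first exact: q_ne.
  move=> _ [tau [s [t0 [Gs ->]]]]; rewrite ler_pdivrMr //.
  have t' : 0 < tau / l by apply: divr_gt0.
  have Gs' : G ((tau / l) *: (l *: x)) s.
    by rewrite scalerA mulrVK ?unitfE ?gt_eqF.
  apply: le_trans (q_le t' Gs') _.
  rewrite le_eqVlt; apply/orP; left; apply/eqP.
  field; apply/andP; split; apply/eqP; lra.
Qed.


Lemma v_exists : exists v, A^T *m v = w /\ forall y t, C (y, t) -> dotv v y <= t + alpha.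
Proof.
have [gam Hg] := @HB_main R (m + n) q q_sublin.
have GA : forall u s, G u s -> dotv gam u <= s + alpha.
  move=> u s Gu; have G1 : G (1 *: u) s by rewrite scale1r.
  by have := q_le ltr01 G1; rewrite divr1; apply: le_trans.
have Ker : forall z, Psi *m z = 0 -> dotv gam z = 0.
  have [tau [s0 [t0 G0]]] := G_dir 0; rewrite scaler0 in G0.
  move=> z hz.
  have Gl : forall lam, G (lam *: z) s0.
    move=> lam; case: G0 => x [t [Ct h]]; exists x, t; split => //.
    by rewrite -scalemxAr hz scaler0; rewrite mulmx0 in Ct.
  apply/eqP; apply/negP => /negP nc.
  have := GA _ _ (Gl ((s0 + alpha + 1) / dotv gam z)).
  rewrite dotvZr divfK //; lra.
have Hsub : (gam^T <= Psi)%MS.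
  rewrite submxE; apply/eqP/matrixP => i j; rewrite (ord1 i) [RHS]mxE.
  have := Ker (cokermx Psi *m delta_mx j 0).
  rewrite mulmxA mulmx_coker mul0mx => /(_ erefl).
  rewrite -colE => h; apply: (etrans _ h).
  rewrite /dotv mxE; apply: eq_bigr => k _; rewrite !mxE.
  by [].
have [Dv hDv] := submxP Hsub.
pose v := Dv^T.
have GAv : forall u s, G u s -> dotv v (Psi *m u) <= s + alpha.
  move=> u s Gu; have := GA u s Gu.
  by rewrite !dotvE hDv /v trmxK mulmxA.
have main : forall y t x, C (y, t) -> dotv v y - dotv (A^T *m v) x <= t - dotv w x + alpha.
  move=> y t x Ct; have Sy : edom g y by apply: DsubS; exists t.
  pose z := col_mx (Qm *m (y - a0)) (x0 - x).
  have Pz : Psi *m z = y - A *m x.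
    rewrite /z mul_row_col coordK; last exact: HBspan.
    by rewrite mulmxBr addrA subrK.
  have Gz : G z (t - dotv w x).
    by exists x, t; split => //; rewrite Pz addrC subrK.
  have := GAv _ _ Gz; rewrite Pz dotvBr dotv_tr; lra.
have hb0 : forall i, `|(0 : 'cV[R]_m) i 0| <= r / 2.
  by move=> i; rewrite mxE normr0 divr_ge0 // ltW // r_gt0.
have [t0 Ct0] := D_box hb0.
set y0 := Phi 0 in Ct0.
pose del := A^T *m v - w.
have del0 : del = 0.
  apply: dotv_self0; rewrite leNgt; apply/negP => dp.
  pose K := t0 + alpha - dotv v y0.
  pose lam := - ((`|K| + 1) / dotv del del).
  have := main y0 t0 (lam *: del) Ct0.
  rewrite !dotvZr.
  have : - lam * dotv del del = `|K| + 1.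
    by rewrite /lam opprK divfK // gt_eqF.
  have : K <= `|K| by apply: ler_norm.
  rewrite /del dotvBl in dp *.
  rewrite /K; nra.
exists v; split; first by apply/eqP; rewrite -subr_eq0; apply/eqP; exact: del0.
move=> y t Ct; have := main y t 0 Ct; rewrite !dotv0r; lra.
Qed.

End Coord.

Lemma main_v : exists v, A^T *m v = w /\ forall y, ((dotv v y)%:E - g y <= alpha%:E)%E.
Proof.
have [m [B [HBr HBs]]] := span_exists (edom g) a0.
have [v [hv hC]] := v_exists HBr HBs.
exists v; split => // y.
have [gy|gy] := eqVneq (g y) +oo%E.
  by rewrite gy /= leNye.
have Sy : edom g y by rewrite /edom /= ltey.
rewrite (gfinE Sy) -EFinB lee_fin.
set tg := fine (g y).
rewrite lerBlDr leNgt; apply/negP => hlt.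
have : epigraph g (y, tg) by rewrite /epigraph /= -gfinE.
move/EsubC/closure_box.
pose eta := (dotv v y - (alpha + tg)) / 2.
have eta0 : 0 < eta by rewrite /eta divr_gt0 //; lra.
pose Nv := \sum_i \sum_j `|(v^T) i j|.
have Nv0 : 0 <= Nv by apply: sumr_ge0 => i _; apply: sumr_ge0 => j _; exact: normr_ge0.
have e0 : 0 < eta / (Nv + 1) by rewrite divr_gt0 //; lra.
move=> /(_ _ e0) [y' [t' [Ct [hy ht]]]].
have := hC _ _ Ct.
have hd : `|dotv v y' - dotv v y| <= Nv * (eta / (Nv + 1)).
  rewrite -dotvBr dotvE.
  apply: (@mx_bound _ _ (v^T) (y' - y) _ (ltW e0)) => j.
  by rewrite !mxE; apply: ltW; apply: hy.
have h1 : Nv * (eta / (Nv + 1)) <= eta.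
  rewrite mulrCA -[X in _ <= X]mulr1; apply: ler_wpM2l; first exact: ltW.
  rewrite ler_pdivrMr; lra.
have h2 : eta / (Nv + 1) <= eta.
  rewrite ler_pdivrMr; [nra|lra].
move: hd ht; rewrite !ler_norml !ltr_norml => /andP [a1 a2] /andP [b1 b2].
have eE : 2 * eta = dotv v y - (alpha + tg) by rewrite /eta; field.
move=> hh; clearbody eta.
move: a1 a2 b1 b2 h1 h2 eE hlt hh; clear; move=> *; lra.
Qed.

End Main.

Unset Implicit Arguments.

Theorem theorem6p7 (R : realType) (p n : nat) (g : 'cV[R]_p -> \bar R)
  (A : 'M[R]_(p, n)) :
  proper_fun g -> nearly_convex_fun g ->
  range (fun x : 'cV[R]_n => A *m x) `&` ri (edom g) !=set0 ->
  forall w : 'cV[R]_n,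
    fconj (fun x => g (A *m x)) w
      = ereal_inf [set fconj g v | v in [set v : 'cV[R]_p | A^T *m v = w]]
    /\ (fconj (fun x => g (A *m x)) w \is a fin_num ->
        exists v : 'cV[R]_p, A^T *m v = w /\
          fconj (fun x => g (A *m x)) w = fconj g v).
Proof.
move=> [_ gfin] [C [Cc [CE EC]]] [a [[x0 _ <-] [a0dom [d [d0 hri]]]]] w.
set F := fconj _ w.
have easy : forall v, A^T *m v = w -> (F <= fconj g v)%E.
  move=> v hv; apply: ge_ereal_sup => _ [x _ <-].
  rewrite -hv dotv_tr; apply: ereal_sup_ubound; by exists (A *m x).
have Flb : ((dotv w x0)%:E - g (A *m x0) <= F)%E.
  by apply: ereal_sup_ubound; exists x0.
have lbinf : (F <= ereal_inf [set fconj g v | v in [set v | A^T *m v = w]])%E.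
  by apply: le_ereal_inf_tmp => _ [v hv <-]; apply: easy.
have gfa := gfinE gfin a0dom.
move: Flb lbinf; rewrite gfa -EFinB.
case E : F => [alpha| |] Flb lbinf.
- have Hal : forall x, ((dotv w x)%:E - g (A *m x) <= alpha%:E)%E.
    by move=> x; rewrite -E; apply: ereal_sup_ubound; exists x.
  have [v [hv Hv]] := main_v gfin Cc CE EC a0dom d0 hri Hal.
  have Fv : fconj g v = alpha%:E.
    apply/eqP; rewrite eq_le; apply/andP; split; last by rewrite -E; apply: easy.
    by apply: ge_ereal_sup => _ [y _ <-]; apply: Hv.
  split; last by move=> _; exists v; split => //; rewrite Fv.
  apply/eqP; rewrite eq_le lbinf /= -Fv.
  by apply: ereal_inf_lbound; exists v.
- split=> //; apply/eqP; rewrite eq_le lbinf /=; exact: leey.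
- by move: Flb; rewrite leNgt ltNye.
Qed.
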